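(* For $P\in\mathcal P(\mathcal X)$, $\Delta\ge0$ and $E\ge0$, the inverse of Blahut's exponent, $R_{\rm B}(E\mid\Delta,P):=\sup\{R\in[0,R_{\max}(\Delta)]: E_{\rm B}(R\mid\Delta,P)\le E\}$, satisfies $$R_{\rm B}(E\mid\Delta,P)=\inf_{\mu\ge0}\ \sup_{\nu\ge0}\Big[\mu E-\nu\Delta+\min_{p_Y\in\mathcal P(\mathcal Y)}G^{(\mu,\nu)}(p_Y\mid P)\Big].$$
   Context: $\mathcal X,\mathcal Y$ finite nonempty sets; $\mathcal P(\cdot)$ probability distributions. Distortion measure $d:\mathcal X\times\mathcal Y\to[0,\infty)$ with $\max_x\min_y d(x,y)=0$. Natural logs. $R(\Delta\mid q)$ is the rate-distortion function $\min\{I(q,V): \sum_{x,y}q(x)V(y|x)d(x,y)\le\Delta\}$ and $R_{\max}(\Delta)=\max_q R(\Delta\mid q)$. Blahut's exponent: $E_{\rm B}(R\mid\Delta,P)=\sup_{\rho\ge0}\Big[\rho R+\inf_{\nu\ge0}\Big\{\rho\nu\Delta-\min_{p_Y\in\mathcal P(\mathcal Y)}\log\sum_{x}P(x)\big(\sum_y p_Y(y)e^{-\nu d(x,y)}\big)^{-\rho}\Big\}\Big]$. For $\mu,\nu\ge0$: $G^{(\mu,\nu)}(p_Y\mid P)=\mu\log\sum_x P(x)\big(\sum_y p_Y(y)e^{-\nu d(x,y)}\big)^{-1/\mu}$ if $\mu>0$, and $G^{(0,\nu)}(p_Y\mid P)=-\log\min_{x}\sum_y p_Y(y)e^{-\nu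 d(x,y)}$. *)

(* Defs.v *)
From HB Require Import structures.
From mathcomp Require Import all_boot all_order all_algebra.
From mathcomp Require Import all_classical all_reals all_analysis.
Set Implicit Arguments. Unset Strict Implicit. Unset Printing Implicit Defensive.
Import Order.TTheory GRing.Theory Num.Theory.
Local Open Scope classical_set_scope.
Local Open Scope ring_scope.

Section RD.
Variables (R : realType) (X Y : finType).

Definition is_pmf (T : finType) (p : T -> R) : Prop :=
  (forall t, 0 <= p t) /\ \sum_(t : T) p t = 1.

(* stochastic matrix (channel) V(y|x) = V x y *)
Definition is_channel (V : X -> Y -> R) : Prop := forall x, is_pmf (V x).

Definition outdist (q : X -> R) (V : X -> Y -> R) (y : Y) : R :=
  \sum_(x : X) q x * V x y.

Definition mutinf (q : X -> R) (V : X -> Y -> R) : R :=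
  \sum_(x : X) \sum_(y : Y)
    (if q x * V x y == 0 then 0
     else q x * V x y * ln (V x y / outdist q V y)).

Definition expdist (d : X -> Y -> R) (q : X -> R) (V : X -> Y -> R) : R :=
  \sum_(x : X) \sum_(y : Y) q x * V x y * d x y.

(* rate-distortion function R(Delta | q) (the min, as an infimum) *)
Definition RDfun (d : X -> Y -> R) (Delta : R) (q : X -> R) : \bar R :=
  ereal_inf [set (mutinf q V)%:E | V in
               [set V | is_channel V /\ expdist d q V <= Delta]].

Definition Rmax (d : X -> Y -> R) (Delta : R) : \bar R :=
  ereal_sup [set RDfun d Delta q | q in [set q | is_pmf q]].

Definition tilt (d : X -> Y -> R) (nu : R) (pY : Y -> R) (x : X) : R :=
  \sum_(y : Y) pY y * expR (- (nu * d x y)).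

Definition EB (d : X -> Y -> R) (Rr Delta : R) (P : X -> R) : \bar R :=
  ereal_sup [set ((rho * Rr)%:E +
     ereal_inf [set ((rho * nu * Delta)%:E -
        ereal_inf [set (ln (\sum_(x : X) P x * (tilt d nu pY x) `^ (- rho)))%:E
                  | pY in [set pY | is_pmf pY]])%E
               | nu in [set nu : R | (0 <= nu)%R]])%E
   | rho in [set rho : R | (0 <= rho)%R]].

Definition RB (d : X -> Y -> R) (E Delta : R) (P : X -> R) : \bar R :=
  ereal_sup [set Rr%:E | Rr in
     [set Rr : R | 0 <= Rr /\ (Rr%:E <= Rmax d Delta)%E /\ (EB d Rr Delta P <= E%:E)%E]].

Definition Gfun (d : X -> Y -> R) (mu nu : R) (pY : Y -> R) (P : X -> R) : R :=
  if 0 < mu then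
    mu * ln (\sum_(x : X) P x * (tilt d nu pY x) `^ (- (1 / mu)))
  else
    - ln (fine (ereal_inf [set (tilt d nu pY x)%:E | x in [set: X]])).

Definition RBdual (d : X -> Y -> R) (E Delta : R) (P : X -> R) : \bar R :=
  ereal_inf [set
     ereal_sup [set ((mu * E - nu * Delta)%:E +
          ereal_inf [set (Gfun d mu nu pY P)%:E | pY in [set pY | is_pmf pY]])%E
       | nu in [set nu : R | (0 <= nu)%R]]
   | mu in [set mu : R | (0 <= mu)%R]].

End RD.

(* Main.v *)
Require Import Defs.
From HB Require Import structures.
From mathcomp Require Import all_boot all_order all_algebra.
From mathcomp Require Import all_classical all_reals all_analysis.
From mathcomp Require Import ring lra.
Import Order.TTheory GRing.Theory Num.Theory.
Local Open Scope classical_set_scope.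
Local Open Scope ring_scope.
Section Scalar.
Context {R : realType}.

Lemma ln_le_sub1 (z : R) : 0 < z -> ln z <= z - 1.
Proof.
move=> z0; have h : -1 < z - 1 by lra.
have := le_ln1Dx h; by rewrite addrC subrK.
Qed.

Lemma powRE' (a b : R) : 0 < a -> a `^ b = expR (b * ln a).
Proof. by move=> a0; rewrite mulrC expRM lnK // posrE. Qed.

Lemma my_ln_div (a b : R) : 0 < a -> 0 < b -> ln (a / b) = ln a - ln b.
Proof.
move=> a0 b0; rewrite lnM ?posrE ?invr_gt0 // lnV // posrE //.
Qed.

Lemma nln_convex (a b s : R) : 0 < a -> 0 < b -> 0 <= s <= 1 ->
  - ln ((1 - s) * a + s * b) <= (1 - s) * (- ln a) + s * (- ln b).
Proof.
move=> a0 b0 /andP[s0 s1].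
set c := (1 - s) * a + s * b.
have c0 : 0 < c.
  rewrite /c; case: (ltrP 0 s) => hs.
    by apply: ltr_pwDr; [apply: mulr_gt0|apply: mulr_ge0]; lra.
  have -> : s = 0 by lra.
  by rewrite subr0 mul1r mul0r addr0.
have ha := ln_le_sub1 _ (divr_gt0 a0 c0).
have hb := ln_le_sub1 _ (divr_gt0 b0 c0).
rewrite my_ln_div // in ha; rewrite my_ln_div // in hb.
have e : (1 - s) * (a / c - 1) + s * (b / c - 1) = 0.
  have hc : ((1 - s) * a + s * b) / c = 1 by rewrite divff // gt_eqF.
  rewrite mulrDl in hc; lra.
have h1 : (1 - s) * (ln a - ln c) <= (1 - s) * (a / c - 1) by apply: ler_wpM2l; lra.
have h2 : s * (ln b - ln c) <= s * (b / c - 1) by apply: ler_wpM2l.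
nra.
Qed.

Lemma expR_quad (u : R) : u <= 1/2 -> expR u <= 1 + u + 2 * u ^+ 2.
Proof.
move=> hu.
have h1 := expR_ge1Dx (- u).
have hp : 0 < 1 - u by lra.
have e : expR u * expR (- u) = 1 by rewrite -expRD subrr expR0.
have hpos := expR_gt0 u.
have : expR u * (1 - u) <= 1 by rewrite -e; apply: ler_wpM2l; [apply: ltW|lra].
move=> h.
have : 1 <= (1 - u) * (1 + u + 2 * u ^+ 2).
  have : 0 <= u ^+ 2 * (1 - 2 * u) by apply: mulr_ge0; [apply: sqr_ge0|lra].
  rewrite expr2; nra.
nra.
Qed.

Lemma xlnx_ge (z : R) : 0 < z -> z - 1 <= z * ln z.
Proof.
move=> z0; have zi : 0 < z^-1 by rewrite invr_gt0.
have := ln_le_sub1 _ zi.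
rewrite lnV ?posrE // => h.
have : z * (- ln z) <= z * (z^-1 - 1) by apply: ler_wpM2l => //; apply: ltW.
rewrite mulrBr mulfV ?gt_eqF //; lra.
Qed.

End Scalar.
Section Pmf.
Context {R : realType} {T : finType}.

Lemma pmf_mix (p p' : T -> R) (s : R) : is_pmf p -> is_pmf p' -> 0 <= s <= 1 ->
  is_pmf (fun y => (1 - s) * p y + s * p' y).
Proof.
move=> [p0 p1] [q0 q1] /andP[s0 s1]; split.
  by move=> y; apply: addr_ge0; apply: mulr_ge0 => //; lra.
by rewrite big_split /= -!mulr_sumr p1 q1; ring.
Qed.

Lemma sum_pos (f : T -> R) (x0 : T) : (forall x, 0 < f x) -> 0 < \sum_x f x.
Proof.
move=> hf; rewrite (bigD1 x0) //=; apply: (lt_le_trans (hf x0)); rewrite lerDl.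
by apply: sumr_ge0 => x _; apply: ltW.
Qed.

Lemma sum_ge_term (f : T -> R) (x0 : T) : (forall x, 0 <= f x) -> f x0 <= \sum_x f x.
Proof.
move=> hf; rewrite (bigD1 x0) //=; rewrite lerDl.
by apply: sumr_ge0 => x _.
Qed.

End Pmf.

Section Minimax.
Context {R : realType} {X Y : finType}.
Variable phi : X -> (Y -> R) -> R.
Variables (B M : R) (x0 : X) (pne : Y -> R).
Hypothesis hpne : is_pmf pne.
Hypothesis hB : forall x p, is_pmf p -> 0 <= phi x p <= B.
Hypothesis hcvx : forall x p p' s, is_pmf p -> is_pmf p' -> 0 <= s <= 1 ->
  phi x (fun y => (1 - s) * p y + s * p' y) <= (1 - s) * phi x p + s * phi x p'.
Hypothesis hM : forall p c, is_pmf p -> (forall x, phi x p <= c) -> M <= c.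

Lemma minimax eps : 0 < eps -> exists q : X -> R, is_pmf q /\
  forall p, is_pmf p -> M - eps <= \sum_x q x * phi x p.
Proof.
move=> eps0.
set e := Num.min eps 1.
have e0 : 0 < e by rewrite lt_min eps0 ltr01.
have e1 : e <= 1 by rewrite ge_min lexx orbT.
have eeps : e <= eps by rewrite ge_min lexx.
have B0 : 0 <= B by have /andP[h1 h2] := hB x0 _ hpne; lra.
set B1 := B + 1.
have B10 : 1 <= B1 by rewrite /B1; lra.
set n : R := #|X|%:R.
have n0 : 0 <= n by rewrite /n.
set t := e / (3 * (n + 1)).
have t0 : 0 < t by rewrite /t divr_gt0 //; lra.
have ht : t * (3 * (n + 1)) = e.
  rewrite /t divfK //; apply: lt0r_neq0; lra.
have tn : t * n <= e / 3 by nra.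
set s := t * e / (12 * B1 ^+ 2).
have B12 : 1 <= B1 ^+ 2 by rewrite expr2; nra.
have hs : s * (12 * B1 ^+ 2) = t * e.
  rewrite /s divfK //; apply: lt0r_neq0; lra.
have s0 : 0 < s by rewrite /s divr_gt0 //; [apply: mulr_gt0|]; lra.
have t13 : t <= 1 / 3 by nra.
have s1 : s <= 1 by nra.
have s01 : 0 <= s <= 1 by rewrite (ltW s0) s1.
set eta := s * e / 6.
have eta0 : 0 < eta by rewrite /eta; apply: divr_gt0 => //; apply: mulr_gt0.
pose Phi (p : Y -> R) := t * ln (\sum_x expR (phi x p / t)).
have Sp : forall p, 0 < \sum_x expR (phi x p / t).
  by move=> p; apply: (sum_pos _ x0) => x; apply: expR_gt0.
have Phige : forall p x, is_pmf p -> phi x p <= Phi p.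
  move=> p x _; rewrite /Phi.
  have : ln (expR (phi x p / t)) <= ln (\sum_x expR (phi x p / t)).
    rewrite ler_ln ?posrE ?expR_gt0 ?Sp //.
    by apply: (sum_ge_term (fun x => expR (phi x p / t))) => y; apply: ltW; apply: expR_gt0.
  rewrite expRK => h.
  have e' : t * (phi x p / t) = phi x p by rewrite mulrC divfK // lt0r_neq0.
  apply: (@le_trans _ _ (t * (phi x p / t))); first by rewrite e'.
  by rewrite ler_pM2l.
pose S := [set (Phi p)%:E | p in [set p | is_pmf p]].
have infge0 : (0 <= ereal_inf S)%E.
  apply: le_ereal_inf_tmp => _ [p hp <-]; rewrite lee_fin.
  have /andP[h1 _] := hB x0 _ hp; exact: le_trans h1 (Phige p x0 hp).
have inffin : ereal_inf S \is a fin_num.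
  rewrite ge0_fin_numE //; apply: (le_lt_trans (ereal_inf_lbound _)).
    by exists pne.
  by rewrite ltry.
have [_ [p0 hp0 <-] hlt] := lb_ereal_inf_adherent eta0 inffin.
have hmin : forall p, is_pmf p -> Phi p0 <= Phi p + eta.
  move=> p hp; have : ((Phi p0)%:E <= (Phi p)%:E + eta%:E)%E.
    apply: (le_trans (ltW hlt)); apply: leeD2r; apply: ereal_inf_lbound.
    by exists p.
  by rewrite -EFinD lee_fin.
set Sx := \sum_x expR (phi x p0 / t).
have Sx0 : 0 < Sx := Sp p0.
pose q x := expR (phi x p0 / t) / Sx.
have q0 : forall x, 0 < q x by move=> x; rewrite /q divr_gt0 // expR_gt0.
have qsum : \sum_x q x = 1 by rewrite /q -mulr_suml divff // gt_eqF.
exists q; split; first by split => // x; apply: ltW.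
move=> p hp.
have hPhi0 : Phi p0 = t * ln Sx by [].
have clA : Phi p0 - t * n <= \sum_x q x * phi x p0.
  have hx : forall x, q x * Phi p0 + t * (q x - 1) <= q x * phi x p0.
    move=> x.
    have e1x : phi x p0 = t * (ln Sx + ln (q x)).
      have eS : Sx * q x = expR (phi x p0 / t) by rewrite /q mulrC divfK // lt0r_neq0.
      by rewrite -lnM ?posrE // eS expRK [t * _]mulrC divfK // lt0r_neq0.
    rewrite e1x hPhi0.
    have h := xlnx_ge _ (q0 x).
    nra.
  have hsum : \sum_x (q x * Phi p0 + t * (q x - 1)) <= \sum_x q x * phi x p0.
    by apply: ler_sum => x _; exact: hx x.
  rewrite big_split /= -mulr_suml qsum mul1r -mulr_sumr sumrB qsum sumr_const in hsum.
  have hm : (1 *+ #|X| : R) = n by [].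
  rewrite hm in hsum; nra.
set D := \sum_x q x * (phi x p - phi x p0).
have clB : - (e / 3) <= D.
  set ps := fun y => (1 - s) * p0 y + s * p y.
  have hps : is_pmf ps by apply: pmf_mix => //; rewrite (ltW s0) s1.
  have h1 := hmin ps hps.
  set K := s * B1 / t.
  set Z := \sum_x q x * expR (s * (phi x p - phi x p0) / t).
  have Z0 : 0 < Z by apply: (sum_pos _ x0) => x; apply: mulr_gt0 => //; apply: expR_gt0.
  have h2 : Phi ps <= Phi p0 + t * ln Z.
    rewrite /Phi -mulrDr; apply: ler_wpM2l; first exact: ltW.
    rewrite -lnM ?posrE //; rewrite ler_ln ?posrE ?Sp //; last exact: mulr_gt0.
    rewrite /Z mulr_sumr; apply: ler_sum => x _.
    have -> : Sx * (q x * expR (s * (phi x p - phi x p0) / t)) =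
              expR (phi x p0 / t + s * (phi x p - phi x p0) / t).
      by rewrite expRD /q; field; exact: lt0r_neq0.
    rewrite ler_expR -mulrDl ler_pM2r ?invr_gt0 //.
    have := hcvx x _ _ _ hp0 hp s01 => hc; rewrite /ps; lra.
  have hK : forall x, (s * (phi x p - phi x p0) / t) ^+ 2 <= K ^+ 2 /\
                      s * (phi x p - phi x p0) / t <= 1 / 2.
    move=> x; have /andP[a1 a2] := hB x _ hp; have /andP[b1 b2] := hB x _ hp0.
    have hd1 : - B1 <= phi x p - phi x p0 <= B1 by apply/andP; rewrite /B1; split; lra.
    have hst : 0 < s / t by rewrite divr_gt0.
    have eu : s * (phi x p - phi x p0) / t = s / t * (phi x p - phi x p0) by rewrite mulrAC.
    have eK : K = s / t * B1 by rewrite /K mulrAC.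
    rewrite eu eK; move/andP: hd1 => [c1 c2].
    have k1 : s / t * (phi x p - phi x p0) <= s / t * B1 by apply: ler_wpM2l => //; exact: ltW.
    have k2 : - (s / t * B1) <= s / t * (phi x p - phi x p0).
      by rewrite -mulrN; apply: ler_wpM2l => //; exact: ltW.
    have hK2 : s / t * B1 <= 1 / 12.
      have : s / t * B1 * (12 * B1) = e.
        have -> : s / t * B1 * (12 * B1) = (s * (12 * B1 ^+ 2)) / t.
          by field; exact: lt0r_neq0.
        by rewrite hs mulrC mulKf //; exact: lt0r_neq0.
      nra.
    split; last lra.
    rewrite !expr2; nra.
  have hZ : Z <= 1 + s / t * D + 2 * K ^+ 2.
    have : Z <= \sum_x (q x + s / t * (q x * (phi x p - phi x p0)) + 2 * K ^+ 2 * q x).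
      apply: ler_sum => x _; have [k1 k2] := hK x.
      have h := expR_quad _ k2; have hq := q0 x; nra.
    move=> hZ'; apply: (le_trans hZ').
    have -> // : \sum_x (q x + s / t * (q x * (phi x p - phi x p0)) + 2 * K ^+ 2 * q x)
      = 1 + s / t * D + 2 * K ^+ 2.
    by rewrite !big_split /= qsum -mulr_sumr -mulr_sumr qsum mulr1.
  have hl := ln_le_sub1 _ Z0.
  have : - eta <= s * D + 2 * t * K ^+ 2.
    have : t * ln Z <= t * (s / t * D + 2 * K ^+ 2) by apply: ler_wpM2l; [exact: ltW|lra].
    rewrite mulrDr mulrA mulrCA divff ?gt_eqF // mulr1 mulrA. lra.
  have ek : 2 * t * K ^+ 2 = s * (e / 6).
    have -> : 2 * t * K ^+ 2 = 2 * (s * (12 * B1 ^+ 2)) * s / (12 * t).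
      by rewrite /K; field; exact: lt0r_neq0.
    rewrite hs; field; exact: lt0r_neq0.
  rewrite ek /eta => h.
  have : s * (- (e / 3)) <= s * D by rewrite mulrN; lra.
  by rewrite ler_pM2l.
have hMp : M <= Phi p0 by apply: (hM _ _ hp0) => x; exact: (Phige _ _ hp0).
have : \sum_x q x * phi x p = \sum_x q x * phi x p0 + D.
  by rewrite /D -big_split /=; apply: eq_bigr => x _; ring.
move=> ->; lra.
Qed.

End Minimax.
Section WD.
Context {R : realType}.

Lemma term_ge (q v Q T c : R) : 0 <= q -> 0 <= v -> q * v <= Q -> 0 < T ->
  q * (v * (c - ln T) + v - Q * expR c / T) <=
  (if q * v == 0 then 0 else q * v * ln (v / Q)).
Proof.
move=> q0 v0 hQ T0.
have Q0 : 0 <= Q by apply: le_trans hQ; apply: mulr_ge0.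
case: eqP => hqv.
  have [->|qp] := eqVneq q 0; first by rewrite mul0r.
  have v00 : v = 0.
    by move/eqP: hqv; rewrite mulf_eq0 (negbTE qp) /= => /eqP.
  rewrite v00 !mul0r add0r add0r; apply: mulr_ge0_le0 => //.
  rewrite oppr_le0; apply: divr_ge0 => //; last exact: ltW.
  by apply: mulr_ge0 => //; apply: ltW; apply: expR_gt0.
have qp : 0 < q by rewrite lt_neqAle q0 andbT; apply/eqP => h; apply: hqv; rewrite -h mul0r.
have vp : 0 < v by rewrite lt_neqAle v0 andbT; apply/eqP => h; apply: hqv; rewrite -h mulr0.
have Qp : 0 < Q by apply: lt_le_trans hQ; apply: mulr_gt0.
set z := Q * expR c / (v * T).
have zp : 0 < z by rewrite /z divr_gt0 // ?mulr_gt0 // expR_gt0.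
have hz := ln_le_sub1 _ zp.
have lz : ln z = ln Q + c - ln v - ln T.
  have a1 : 0 < Q * expR c by rewrite mulr_gt0 // expR_gt0.
  have a2 : 0 < v * T by rewrite mulr_gt0.
  rewrite /z (ln_div a1 a2).
  have -> : ln (Q * expR c) = ln Q + c.
    by rewrite (@lnM _ Q (expR c)) ?posrE ?expR_gt0 // expRK.
  rewrite (@lnM _ v T) ?posrE //; ring.
have hvz : v * z = Q * expR c / T by rewrite /z; field; apply/andP; split; apply: lt0r_neq0.
rewrite -[q * v * _]mulrA ler_pM2l //.
rewrite ln_div // -hvz.
have : v * ln z <= v * (z - 1) by rewrite ler_pM2l.
rewrite lz; nra.
Qed.

End WD.

Section RDlem.
Context {R : realType} {X Y : finType}.
Variable d : X -> Y -> R.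
Hypothesis hd0 : forall x y, 0 <= d x y.

Lemma outdist_pmf (q : X -> R) (V : X -> Y -> R) : is_pmf q -> is_channel V -> is_pmf (outdist q V).
Proof.
move=> [q0 q1] hV; split.
  by move=> y; apply: sumr_ge0 => x _; apply: mulr_ge0 => //; case: (hV x).
rewrite /outdist exchange_big /=.
rewrite -q1; apply: eq_bigr => x _; rewrite -mulr_sumr.
by case: (hV x) => _ ->; rewrite mulr1.
Qed.

Lemma sum_lin4 (I : finType) (a b c e : R) (f g h k : I -> R) :
  \sum_i (a * f i + b * g i + c * h i + e * k i) =
  a * \sum_i f i + b * \sum_i g i + c * \sum_i h i + e * \sum_i k i.
Proof. by rewrite !big_split /= !mulr_sumr. Qed.

Definition dM := \sum_x \sum_y d x y.

Lemma d_le_dM x y : d x y <= dM.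
Proof.
rewrite /dM; apply: le_trans (sum_ge_term (fun x => \sum_y d x y) x _).
  by apply: (sum_ge_term (d x)).
by move=> x'; apply: sumr_ge0.
Qed.

Lemma dM_ge0 : 0 <= dM.
Proof. by apply: sumr_ge0 => x _; apply: sumr_ge0. Qed.

Lemma tilt_ge (nu : R) (pY : Y -> R) x : 0 <= nu -> is_pmf pY ->
  expR (- (nu * dM)) <= tilt d nu pY x.
Proof.
move=> nu0 [p0 p1]; rewrite /tilt.
have -> : expR (- (nu * dM)) = \sum_y pY y * expR (- (nu * dM)).
  by rewrite -mulr_suml p1 mul1r.
apply: ler_sum => y _; apply: ler_wpM2l => //.
by rewrite ler_expR lerN2; apply: ler_wpM2l => //; apply: d_le_dM.
Qed.

Lemma tilt_gt0 (nu : R) (pY : Y -> R) x : 0 <= nu -> is_pmf pY -> 0 < tilt d nu pY x.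
Proof. by move=> h1 h2; apply: (lt_le_trans _ (tilt_ge _ _ x h1 h2)); apply: expR_gt0. Qed.

Lemma tilt_le1 (nu : R) (pY : Y -> R) x : 0 <= nu -> is_pmf pY -> tilt d nu pY x <= 1.
Proof.
move=> nu0 [p0 p1]; rewrite /tilt -p1; apply: ler_sum => y _.
rewrite -[X in _ <= X]mulr1; apply: ler_wpM2l => //.
by rewrite expR_le1 oppr_le0; apply: mulr_ge0.
Qed.

Lemma tilt_mix (nu s : R) (p p' : Y -> R) x :
  tilt d nu (fun y => (1 - s) * p y + s * p' y) x =
  (1 - s) * tilt d nu p x + s * tilt d nu p' x.
Proof.
rewrite /tilt !mulr_sumr -big_split /=; apply: eq_bigr => y _; ring.
Qed.

Lemma weak_duality (q : X -> R) (V : X -> Y -> R) (nu : R) : 0 <= nu -> is_pmf q -> is_channel V ->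
  - (nu * expdist d q V) + \sum_x q x * (- ln (tilt d nu (outdist q V) x))
  <= mutinf q V.
Proof.
move=> nu0 hq hV.
have hQ := outdist_pmf _ _ hq hV.
have Tp : forall x, 0 < tilt d nu (outdist q V) x.
  by move=> x; apply: tilt_gt0.
set T := tilt d nu (outdist q V).
have step : forall x,
  q x * (- (nu * \sum_y V x y * d x y) - ln (T x)) =
  \sum_y q x * (V x y * (- (nu * d x y) - ln (T x)) + V x y -
                outdist q V y * expR (- (nu * d x y)) / T x).
  move=> x; rewrite -mulr_sumr; congr (_ * _).
  rewrite [RHS](eq_bigr (fun y => (- nu) * (V x y * d x y) + (- ln (T x)) * V x y
      + 1 * V x y + (- (T x)^-1) * (outdist q V y * expR (- (nu * d x y))))); last first.
    by move=> y _; ring.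
  rewrite sum_lin4; case: (hV x) => _ ->.
  have -> : \sum_y outdist q V y * expR (- (nu * d x y)) = T x by [].
  have := Tp x; rewrite -/T => hT.
  field; exact: lt0r_neq0.
have : - (nu * expdist d q V) + \sum_x q x * - ln (T x) =
   \sum_x q x * (- (nu * \sum_y V x y * d x y) - ln (T x)).
  rewrite [RHS](eq_bigr (fun x => - (nu * (q x * \sum_y V x y * d x y)) + q x * - ln (T x))); last first.
    by move=> x _; ring.
  rewrite big_split /= sumrN -mulr_sumr /expdist; congr (- (nu * _) + _).
  by apply: eq_bigr => x _; rewrite mulr_sumr; apply: eq_bigr => y _; ring.
move=> ->; rewrite /mutinf; apply: ler_sum => x _; rewrite step.
apply: ler_sum => y _; apply: term_ge.
- by case: hq.
- by case: (hV x) => h _; apply: h.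
- rewrite /outdist (bigD1 x) //= lerDl; apply: sumr_ge0 => x' _.
  by apply: mulr_ge0; [case: hq|case: (hV x') => h _; apply: h].
- exact: Tp.
Qed.

End RDlem.
Section Main.
Context {R : realType} {X Y : finType}.
Variable d : X -> Y -> R.
Hypothesis hd0 : forall x y, 0 <= d x y.
Variables (x0 : X) (y0 : Y).
Variable P : X -> R.
Hypothesis hP : is_pmf P.

Lemma lee_eps (x y : \bar R) : (forall e : R, 0 < e -> (x <= y + e%:E)%E) -> (x <= y)%E.
Proof. by move=> h; apply/lee_addgt0Pr => e e0; exact: h. Qed.

Definition unifY : Y -> R := fun _ => (#|Y|%:R)^-1.

Lemma unifY_pmf : is_pmf unifY.
Proof.
have hY : (0 < #|Y|)%N by apply/card_gt0P; exists y0.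
split; first by move=> y; rewrite /unifY invr_ge0.
rewrite /unifY sumr_const -[_ *+ _]mulr_natr mulVf //.
by rewrite pnatr_eq0 -lt0n.
Qed.

Definition Lf (rho nu : R) (pY : Y -> R) :=
  ln (\sum_x P x * tilt d nu pY x `^ (- rho)).

Lemma pow_ge1 (t rho : R) : 0 < t -> t <= 1 -> 0 <= rho -> 1 <= t `^ (- rho).
Proof.
move=> t0 t1 r0; rewrite powRE' // -expR0 ler_expR.
rewrite mulNr oppr_ge0; apply: mulr_ge0_le0 => //; exact: ln_le0.
Qed.

Lemma Lf_ge0 rho nu pY : 0 <= rho -> 0 <= nu -> is_pmf pY -> 0 <= Lf rho nu pY.
Proof.
move=> r0 n0 hp; rewrite /Lf; apply: ln_ge0.
case: hP => P0 P1; rewrite -P1; apply: ler_sum => x _.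
rewrite -[X in X <= _]mulr1; apply: ler_wpM2l => //.
apply: pow_ge1 => //; [exact: tilt_gt0|exact: tilt_le1].
Qed.

Definition tmin (nu : R) (pY : Y -> R) : R :=
  fine (ereal_inf [set (tilt d nu pY x)%:E | x in [set: X]]).

Lemma tmin_fin nu pY : 0 <= nu -> is_pmf pY ->
  ereal_inf [set (tilt d nu pY x)%:E | x in [set: X]] \is a fin_num.
Proof.
move=> n0 hp; rewrite fin_numE; apply/andP; split.
  rewrite gt_eqF //; apply: (@lt_le_trans _ _ (expR (- (nu * dM d)))%:E); first by rewrite ltNye.
  apply: le_ereal_inf_tmp => _ [x _ <-]; rewrite lee_fin; exact: tilt_ge.
rewrite lt_eqF //; apply: (@le_lt_trans _ _ (tilt d nu pY x0)%:E); last by rewrite ltry.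
by apply: ereal_inf_lbound; exists x0.
Qed.

Lemma tmin_le nu pY x : 0 <= nu -> is_pmf pY -> tmin nu pY <= tilt d nu pY x.
Proof.
move=> n0 hp; rewrite /tmin -lee_fin fineK; last exact: tmin_fin.
by apply: ereal_inf_lbound; exists x.
Qed.

Lemma tmin_glb nu pY c : 0 <= nu -> is_pmf pY -> (forall x, c <= tilt d nu pY x) ->
  c <= tmin nu pY.
Proof.
move=> n0 hp hc; rewrite /tmin -lee_fin fineK; last exact: tmin_fin.
by apply: le_ereal_inf_tmp => _ [x _ <-]; rewrite lee_fin.
Qed.

Lemma tmin_gt0 nu pY : 0 <= nu -> is_pmf pY -> 0 < tmin nu pY.
Proof.
move=> n0 hp; apply: (@lt_le_trans _ _ (expR (- (nu * dM d)))); first exact: expR_gt0.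
by apply: tmin_glb => // x; apply: tilt_ge.
Qed.

Lemma G0E nu pY : Gfun d 0 nu pY P = - ln (tmin nu pY).
Proof. by rewrite /Gfun ltxx. Qed.

Lemma GposE mu nu pY : 0 < mu -> Gfun d mu nu pY P = mu * Lf (1 / mu) nu pY.
Proof. by move=> h; rewrite /Gfun h. Qed.

Lemma G_ge0 mu nu pY : 0 <= mu -> 0 <= nu -> is_pmf pY -> 0 <= Gfun d mu nu pY P.
Proof.
move=> m0 n0 hp; case: (ltrP 0 mu) => hm.
  rewrite GposE //; apply: mulr_ge0 => //; apply: Lf_ge0 => //.
  by rewrite divr_ge0.
have -> : mu = 0 by apply/eqP; rewrite eq_le hm m0.
rewrite G0E oppr_ge0; apply: ln_le0.
apply: (le_trans (tmin_le _ _ x0 n0 hp)); exact: tilt_le1.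
Qed.

Lemma G_le_G0 mu nu pY : 0 < mu -> 0 <= nu -> is_pmf pY ->
  Gfun d mu nu pY P <= Gfun d 0 nu pY P.
Proof.
move=> m0 n0 hp; rewrite GposE // G0E /Lf.
set tm := tmin nu pY.
have tm0 : 0 < tm := tmin_gt0 _ _ n0 hp.
have hs : \sum_x P x * tilt d nu pY x `^ (- (1 / mu)) <= tm `^ (- (1 / mu)).
  case: hP => P0 P1.
  have e : \sum_x P x * tm `^ (- (1 / mu)) = tm `^ (- (1 / mu)).
    by rewrite -mulr_suml P1 mul1r.
  rewrite -e.
  apply: ler_sum => x _.
  apply: ler_wpM2l => //.
  have tx0 : 0 < tilt d nu pY x by apply: tilt_gt0.
  rewrite !powRE' // ler_expR !mulNr lerN2; apply: ler_wpM2l; first by rewrite divr_ge0 // ltW.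
  by rewrite ler_ln ?posrE //; apply: tmin_le.
have hs0 : 0 < \sum_x P x * tilt d nu pY x `^ (- (1 / mu)).
  case: hP => P0 P1.
  apply: (@lt_le_trans _ _ (\sum_x P x * 1)); first by rewrite -mulr_suml mulr1 P1.
  apply: ler_sum => x _; apply: ler_wpM2l => //.
  apply: pow_ge1; [exact: tilt_gt0|exact: tilt_le1|by rewrite divr_ge0 // ltW].
have : ln (\sum_x P x * tilt d nu pY x `^ (- (1 / mu))) <= ln (tm `^ (- (1 / mu))).
  by rewrite ler_ln ?posrE // powR_gt0.
rewrite ln_powR => h.
have e : mu * (- (1 / mu) * ln tm) = - ln tm by field; exact: lt0r_neq0.
by rewrite -e ler_pM2l.
Qed.

Variables (E Delta : R).
Hypotheses (hE : 0 <= E) (hDelta : 0 <= Delta).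

Definition infG mu nu := ereal_inf [set (Gfun d mu nu pY P)%:E | pY in [set pY | is_pmf pY]].
Definition gm mu nu := fine (infG mu nu).

Lemma infG_ge0 mu nu : 0 <= mu -> 0 <= nu -> (0 <= infG mu nu)%E.
Proof.
move=> m0 n0; apply: le_ereal_inf_tmp => _ [pY hp <-]; rewrite lee_fin; exact: G_ge0.
Qed.

Lemma infG_le mu nu pY : is_pmf pY -> (infG mu nu <= (Gfun d mu nu pY P)%:E)%E.
Proof. by move=> hp; apply: ereal_inf_lbound; exists pY. Qed.

Lemma infGE mu nu : 0 <= mu -> 0 <= nu -> infG mu nu = (gm mu nu)%:E.
Proof.
move=> m0 n0; rewrite /gm fineK // ge0_fin_numE ?infG_ge0 //.
by apply: (le_lt_trans (infG_le mu nu _ unifY_pmf)); rewrite ltry.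
Qed.

Lemma gm_ge0 mu nu : 0 <= mu -> 0 <= nu -> 0 <= gm mu nu.
Proof. by move=> m0 n0; rewrite -lee_fin -infGE //; apply: infG_ge0. Qed.

Lemma gm_le mu nu pY : 0 <= mu -> 0 <= nu -> is_pmf pY -> gm mu nu <= Gfun d mu nu pY P.
Proof. by move=> m0 n0 hp; rewrite -lee_fin -infGE //; apply: infG_le. Qed.

Lemma gm_mono mu nu : 0 < mu -> 0 <= nu -> gm mu nu <= gm 0 nu.
Proof.
move=> m0 n0; rewrite -lee_fin -!infGE //; last exact: ltW.
apply: le_ereal_inf_tmp => _ [pY hp <-].
apply: le_trans (infG_le _ _ _ hp) _; rewrite lee_fin; exact: G_le_G0.
Qed.

Definition Dm mu := ereal_sup [set ((mu * E - nu * Delta)%:E + infG mu nu)%E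
   | nu in [set nu : R | (0 <= nu)%R]].

Lemma DmE mu : 0 <= mu ->
  Dm mu = ereal_sup [set (mu * E - nu * Delta + gm mu nu)%:E | nu in [set nu : R | (0 <= nu)%R]].
Proof.
move=> m0; rewrite /Dm; congr ereal_sup; apply: eq_imagel => nu hnu.
by rewrite infGE // EFinD.
Qed.

Lemma RBdualE : RBdual d E Delta P = ereal_inf [set Dm mu | mu in [set mu : R | (0 <= mu)%R]].
Proof. by []. Qed.

Definition Ivar := ereal_inf [set Dm mu | mu in [set mu : R | (0 < mu)%R]].

Lemma Dm_ge mu : 0 <= mu -> ((mu * E)%:E <= Dm mu)%E.
Proof.
move=> m0; rewrite DmE //; apply: (@le_trans _ _ ((mu * E - 0 * Delta + gm mu 0)%:E)).
  by rewrite lee_fin mul0r subr0 lerDl; apply: gm_ge0.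
by apply: ereal_sup_ubound; exists 0; first exact: lexx.
Qed.

Lemma Dm_le mu : 0 < mu -> (Dm mu <= (mu * E)%:E + Dm 0)%E.
Proof.
move=> m0; rewrite (DmE mu (ltW m0)) (DmE 0 (lexx 0)).
apply: ge_ereal_sup => _ [nu hnu <-].
apply: (@le_trans _ _ ((mu * E)%:E + (0 * E - nu * Delta + gm 0 nu)%:E)); last first.
  by apply: leeD => //; apply: ereal_sup_ubound; exists nu.
rewrite -EFinD lee_fin mul0r sub0r.
have := gm_mono mu nu m0 hnu; lra.
Qed.

Lemma Ivar_ge0 : (0 <= Ivar)%E.
Proof.
apply: le_ereal_inf_tmp => _ [mu hmu <-]; apply: le_trans (Dm_ge mu (ltW hmu)).
by rewrite lee_fin; apply: mulr_ge0 => //; apply: ltW.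
Qed.

Lemma Ivar_le_D0 : (Ivar <= Dm 0)%E.
Proof.
have E1 : 0 < E + 1 by have := hE; lra.
apply: lee_eps => eps eps0.
set mu := eps / (E + 1).
have mu0 : 0 < mu by rewrite /mu; apply: divr_gt0.
apply: (@le_trans _ _ (Dm mu)); first by apply: ereal_inf_lbound; exists mu.
apply: (le_trans (Dm_le mu mu0)); rewrite addeC; apply: leeD => //.
rewrite lee_fin /mu.
have EE : E <= E + 1 by rewrite lerDl.
have : eps / (E + 1) * E <= eps / (E + 1) * (E + 1) by rewrite ler_pM2l.
by rewrite divfK //; apply: lt0r_neq0.
Qed.

Lemma RBdual_Ivar : RBdual d E Delta P = Ivar.
Proof.
rewrite RBdualE; apply/eqP; rewrite eq_le; apply/andP; split.
  apply: le_ereal_inf_tmp => _ [mu hmu <-]; apply: ereal_inf_lbound.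
  by exists mu => //; rewrite /= ltW.
apply: le_ereal_inf_tmp => _ [mu hmu <-].
case: (ltrP 0 mu) => hm.
  by apply: ereal_inf_lbound; exists mu.
have -> : mu = 0 by apply/eqP; rewrite eq_le hm; exact: hmu.
exact: Ivar_le_D0.
Qed.

Definition mset rho nu := [set (Lf rho nu pY)%:E | pY in [set pY | is_pmf pY]].
Definition mr rho nu := fine (ereal_inf (mset rho nu)).

Lemma mE rho nu : 0 <= rho -> 0 <= nu -> ereal_inf (mset rho nu) = (mr rho nu)%:E.
Proof.
move=> r0 n0; have h0 : (0 <= ereal_inf (mset rho nu))%E.
  by apply: le_ereal_inf_tmp => _ [pY hp <-]; rewrite lee_fin; apply: Lf_ge0.
rewrite /mr fineK // ge0_fin_numE //.
apply: (@le_lt_trans _ _ (Lf rho nu unifY)%:E); last by rewrite ltry.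
by apply: ereal_inf_lbound; exists unifY => //; apply: unifY_pmf.
Qed.

Lemma mr_ge0 rho nu : 0 <= rho -> 0 <= nu -> 0 <= mr rho nu.
Proof.
move=> r0 n0; rewrite -lee_fin -mE //.
by apply: le_ereal_inf_tmp => _ [pY hp <-]; rewrite lee_fin; apply: Lf_ge0.
Qed.

Lemma gmE mu nu : 0 < mu -> 0 <= nu -> gm mu nu = mu * mr (1 / mu) nu.
Proof.
move=> m0 n0; rewrite /gm /infG.
have -> : [set (Gfun d mu nu pY P)%:E | pY in [set pY | is_pmf pY]] =
          [set (mu%:E * z)%E | z in mset (1 / mu) nu].
  apply/seteqP; split => z.
    move=> [pY hp <-]; exists (Lf (1 / mu) nu pY)%:E; first by exists pY.
    by rewrite GposE // EFinM.
  move=> [_ [pY hp <-] <-]; exists pY => //.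
  by rewrite GposE // EFinM.
rewrite ereal_inf_pZl // mE //; last by rewrite divr_ge0 // ltW.
Qed.

Lemma EBE R0 : EB d R0 Delta P = ereal_sup [set ((rho * R0)%:E +
   ereal_inf [set (rho * nu * Delta - mr rho nu)%:E | nu in [set nu : R | (0 <= nu)%R]])%E
   | rho in [set rho : R | (0 <= rho)%R]].
Proof.
rewrite /EB; congr ereal_sup; apply: eq_imagel => rho hrho.
congr (_ + _)%E; congr ereal_inf; apply: eq_imagel => nu hnu.
by have := mE rho nu hrho hnu; rewrite /mset /Lf => ->; rewrite EFinB.
Qed.

Lemma sup_gt (S : set \bar R) (r e : R) : 0 < e -> (r%:E <= ereal_sup S)%E ->
  exists2 z, S z & ((r - e)%:E < z)%E.
Proof.
move=> e0 h; apply: contrapT => hn.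
have : (ereal_sup S <= (r - e)%:E)%E.
  apply: ge_ereal_sup => z Sz; rewrite leNgt; apply/negP => hz; apply: hn; by exists z.
move=> h2; have := le_trans h h2; rewrite lee_fin; lra.
Qed.

Lemma EB_iff R0 : (EB d R0 Delta P <= E%:E)%E <-> (R0%:E <= Ivar)%E.
Proof.
have hE' := hE; have hD' := hDelta.
split.
- move=> hEB; apply: le_ereal_inf_tmp => _ [mu hmu <-].
  rewrite leNgt; apply/negP => hlt.
  have mu0 : 0 < mu := hmu.
  have hge := Dm_ge mu (ltW mu0).
  have hfin : Dm mu \is a fin_num.
    rewrite fin_numE; apply/andP; split.
      by rewrite gt_eqF //; apply: (lt_le_trans _ hge); rewrite ltNye.
    by rewrite lt_eqF //; apply: (lt_trans hlt); rewrite ltry.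
  set D := fine (Dm mu).
  have hD : Dm mu = D%:E by rewrite /D fineK.
  rewrite hD lte_fin in hlt.
  set rho := 1 / mu.
  have rho0 : 0 < rho by rewrite /rho divr_gt0.
  have hnu : forall nu, 0 <= nu -> E - rho * D <= rho * nu * Delta - mr rho nu.
    move=> nu hnu.
    have : ((mu * E - nu * Delta + gm mu nu)%:E <= Dm mu)%E.
      by rewrite (DmE mu (ltW mu0)); apply: ereal_sup_ubound; exists nu.
    rewrite hD lee_fin gmE // -/rho => h.
    have h2 : rho * (mu * E - nu * Delta + mu * mr rho nu) <= rho * D by rewrite ler_pM2l.
    have e2 : rho * (mu * E - nu * Delta + mu * mr rho nu) = E - rho * nu * Delta + mr rho nu.
      by rewrite /rho; field; exact: lt0r_neq0.
    rewrite e2 in h2; lra.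
  have : ((rho * R0 + (E - rho * D))%:E <= EB d R0 Delta P)%E.
    rewrite EBE; apply: (@le_trans _ _ ((rho * R0)%:E + ereal_inf [set (rho * nu * Delta - mr rho nu)%:E | nu in [set nu : R | (0 <= nu)%R]])%E); last first.
      by apply: ereal_sup_ubound; exists rho => //; apply: ltW.
    rewrite EFinD; apply: leeD => //; apply: le_ereal_inf_tmp => _ [nu hn <-].
    by rewrite lee_fin; apply: hnu.
  move=> h; have := le_trans h hEB; rewrite lee_fin => h3.
  have : rho * D < rho * R0 by rewrite ltr_pM2l.
  lra.
- move=> hI; rewrite EBE; apply: ge_ereal_sup => _ [rho hrho <-].
  case: (ltrP 0 rho) => hr; last first.
    have -> : rho = 0 by apply/eqP; rewrite eq_le hr; exact: hrho.
    apply: (@le_trans _ _ ((0 * R0)%:E + (0 * 0 * Delta - mr 0 0)%:E)%E).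
      by apply: leeD => //; apply: ereal_inf_lbound; exists 0; first exact: lexx.
    rewrite -EFinD lee_fin !mul0r add0r.
    have := mr_ge0 0 0 (lexx 0) (lexx 0); lra.
  apply: lee_eps => e e0.
  set mu := 1 / rho.
  have mu0 : 0 < mu by rewrite /mu divr_gt0.
  have hI' : (R0%:E <= Dm mu)%E.
    by apply: (le_trans hI); apply: ereal_inf_lbound; exists mu.
  rewrite (DmE mu (ltW mu0)) in hI'.
  have er : 0 < e / rho by rewrite divr_gt0.
  have [_ [nu hnu <-] hz] := sup_gt _ _ _ er hI'.
  rewrite lte_fin gmE // in hz.
  have emr : 1 / mu = rho by rewrite /mu; field; exact: lt0r_neq0.
  rewrite emr in hz.
  apply: (@le_trans _ _ ((rho * R0)%:E + (rho * nu * Delta - mr rho nu)%:E)%E).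
    by apply: leeD => //; apply: ereal_inf_lbound; exists nu.
  rewrite -!EFinD lee_fin.
  have h2 : rho * (R0 - e / rho) < rho * (mu * E - nu * Delta + mu * mr rho nu) by rewrite ltr_pM2l.
  have e1 : rho * (R0 - e / rho) = rho * R0 - e by field; exact: lt0r_neq0.
  have e2 : rho * (mu * E - nu * Delta + mu * mr rho nu) = E - rho * nu * Delta + mr rho nu.
    by rewrite /mu; field; exact: lt0r_neq0.
  rewrite e1 e2 in h2; lra.
Qed.

Lemma Dm0_le_Rmax : (Dm 0 <= Rmax d Delta)%E.
Proof.
have hD' := hDelta.
rewrite (DmE 0 (lexx 0)); apply: ge_ereal_sup => _ [nu hnu <-].
have nu0 : 0 <= nu := hnu.
apply: lee_eps => e e0.
set g0 := gm 0 nu.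
pose phi := fun (x : X) (p : Y -> R) => - ln (tilt d nu p x).
have hB : forall x p, is_pmf p -> 0 <= phi x p <= nu * dM d.
  move=> x p hp; rewrite /phi; apply/andP; split.
    rewrite oppr_ge0; apply: ln_le0; exact: tilt_le1.
  rewrite lerNl -[X in X <= _]expRK ler_ln ?posrE ?expR_gt0 //; last exact: tilt_gt0.
  exact: tilt_ge.
have hcvx : forall x p p' s, is_pmf p -> is_pmf p' -> 0 <= s <= 1 ->
  phi x (fun y => (1 - s) * p y + s * p' y) <= (1 - s) * phi x p + s * phi x p'.
  move=> x p p' s hp hp' hs; rewrite /phi tilt_mix.
  by apply: nln_convex => //; apply: tilt_gt0.
have hM : forall p c, is_pmf p -> (forall x, phi x p <= c) -> g0 <= c.
  move=> p c hp hc; apply: (le_trans (gm_le 0 nu p (lexx 0) nu0 hp)).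
  rewrite G0E lerNl -[X in X <= _]expRK ler_ln ?posrE ?expR_gt0 //; last exact: tmin_gt0.
  apply: tmin_glb => // x; have := hc x; rewrite /phi lerNl => h.
  by rewrite -[X in _ <= X]lnK ?posrE; [rewrite ler_expR|apply: tilt_gt0].
have [q [hq hqb]] := minimax phi (nu * dM d) g0 x0 unifY unifY_pmf hB hcvx hM e e0.
apply: (@le_trans _ _ ((- (nu * Delta) + g0 - e)%:E + e%:E)%E).
  by rewrite -EFinD lee_fin mul0r sub0r subrK.
apply: leeD => //.
apply: (@le_trans _ _ (RDfun d Delta q)); last first.
  by apply: ereal_sup_ubound; exists q.
apply: le_ereal_inf_tmp => _ [V [hV hexp] <-]; rewrite lee_fin.
apply: (le_trans _ (weak_duality d hd0 q V nu nu0 hq hV)).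
have := hqb _ (outdist_pmf q V hq hV).
have : nu * expdist d q V <= nu * Delta by apply: ler_wpM2l.
rewrite /phi; lra.
Qed.

Lemma sq1_ge0 (s : R) : 0 <= s * s + 1.
Proof. nra. Qed.

Lemma no_sq (s : R) : s * s + 1 <= s -> False.
Proof.
move=> h; have : 0 <= (s - 1 / 2) ^+ 2 by apply: sqr_ge0.
rewrite expr2 => hq; nra.
Qed.

Lemma ge0_cases (x : \bar R) : (0 <= x)%E -> (exists2 r, x = r%:E & 0 <= r) \/ x = +oo%E.
Proof.
case: x => [r| |] //= h; last by right.
by left; exists r => //; rewrite -lee_fin.
Qed.

Lemma RB_Ivar : RB d E Delta P = Ivar.
Proof.
have hIR : (Ivar <= Rmax d Delta)%E := le_trans Ivar_le_D0 Dm0_le_Rmax.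
have hsub : forall r, 0 <= r -> (r%:E <= Ivar)%E -> (r%:E <= RB d E Delta P)%E.
  move=> r r0 hr; apply: ereal_sup_ubound; exists r => //.
  by split => //; split; [exact: le_trans hr hIR|apply/EB_iff].
apply/eqP; rewrite eq_le; apply/andP; split.
  apply: ge_ereal_sup => _ [r [r0 [hr1 hr2]] <-]; exact/EB_iff.
case: (ge0_cases _ Ivar_ge0) => [[r hr r0]|hinf].
  by rewrite hr; apply: hsub => //; rewrite hr.
rewrite hinf.
have h1 : forall r, 0 <= r -> (r%:E <= RB d E Delta P)%E.
  by move=> r r0; apply: hsub => //; rewrite hinf leey.
move: (RB d E Delta P) h1 => z; case: z => [s| |] h1 //.
  have := h1 (s * s + 1) (sq1_ge0 s); rewrite lee_fin => h.
  by exfalso; exact: (no_sq _ h).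
have := h1 0 (lexx 0); by [].
Qed.

End Main.

Theorem theorem2 (R : realType) (X Y : finType) (d : X -> Y -> R)
  (hX : (0 < #|X|)%N) (hY : (0 < #|Y|)%N)
  (hd0 : forall x y, 0 <= d x y)
  (hd : ereal_sup [set ereal_inf [set (d x y)%:E | y in [set: Y]]
                  | x in [set: X]] = 0%E)
  (P : X -> R) (hP : is_pmf P) (Delta E : R)
  (hDelta : 0 <= Delta) (hE : 0 <= E) :
  RB d E Delta P = RBdual d E Delta P.
Proof.
have /card_gt0P [x0 _] := hX.
have /card_gt0P [y0 _] := hY.
rewrite (RB_Ivar d hd0 x0 y0 P hP E Delta hE hDelta) (RBdual_Ivar d hd0 x0 y0 P hP E Delta hE).
by [].
Qed.
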